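(* The lattice of characteristic subgroups of a finite abelian group $G$ is a chain if and only if $G\cong Z_{p^k}^{\mu_1}\times Z_{p^{k+1}}^{\mu_2}$ for some integers $k,\mu_1,\mu_2\ge 0$ and some prime $p$.
   Context: $Z_{p^a}^{\mu}$ denotes the direct product of $\mu$ copies of the cyclic group of order $p^a$. A lattice is a chain if any two of its elements are comparable. *)

(* Defs.v *)
From mathcomp Require Import all_boot all_fingroup all_algebra all_solvable.
Set Implicit Arguments. Unset Strict Implicit. Unset Printing Implicit Defensive.

(* Z_n (n > 0) is modelled by 'I_(n.-1.+1), whose canonical finGroupType law
   is addition mod n. *)
(* Z_{p^k}^{mu1} x Z_{p^(k+1)}^{mu2}, realised as pairs of row vectors
   with componentwise (additive) group law. *)
Definition ZZtype (p k mu1 mu2 : nat) : finGroupType :=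
  ('rV['I_(p ^ k).-1.+1]_mu1 * 'rV['I_(p ^ k.+1).-1.+1]_mu2)%type.

Definition char_chain (gT : finGroupType) (G : {group gT}) : Prop :=
  forall H K : {group gT}, (H \char G)%g -> (K \char G)%g ->
    ((H \subset K) || (K \subset H))%g.

(* Main.v *)
Require Import Defs.
From mathcomp Require Import all_boot all_fingroup all_algebra all_solvable.

Module PT1.
Set Implicit Arguments. Unset Strict Implicit. Unset Printing Implicit Defensive.
Local Open Scope group_scope.

Lemma char_transvect (gT : finGroupType) (G H K : {group gT}) (x y k : gT) (c : nat) :
  abelian G -> H \char G -> <[x]> \x K = G -> y \in K -> #[y] %| #[x] ->
  k \in K -> x ^+ c * k \in H -> y ^+ c \in H.
Proof.
move=> cGG chH defG Ky dyx Kk Hh.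
have [_ defxK _ _] := dprodP defG.
have sxG : <[x]> \subset G by rewrite -defxK mulG_subl.
have sKG : K \subset G by rewrite -defxK mulG_subr.
have Gx : x \in G by rewrite -cycle_subG.
have Gy : y \in G by apply: (subsetP sKG).
have cxy : commute x y by apply: (centsP cGG).
have dvd : #[x * y] %| #[x].
  by rewrite order_dvdn expgMn // expg_order mul1g -order_dvdn.
pose f1 : {morphism <[x]> >-> gT} := eltm_morphism dvd.
have f1x : f1 x = x * y by have := eltmE dvd 1; rewrite !expg1 => e; exact: e.
have f1X : forall i, f1 (x ^+ i) = (x * y) ^+ i by move=> i; have := eltmE dvd i => e; exact: e.
have sf1 : f1 @* <[x]> \subset G.
  by rewrite morphim_cycle ?cycle_id // cycle_subG f1x groupM.
have cf : (idm K) @* K \subset 'C(f1 @* <[x]>).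
  by rewrite morphim_idm // (sub_abelian_cent2 cGG).
pose g : {morphism G >-> gT} := dprodm_morphism defG cf.
have gl : forall a, a \in <[x]> -> g a = f1 a by move=> a xa; have := dprodmEl defG cf xa => e; exact: e.
have gk : forall z, z \in K -> g z = z by move=> z Kz; have := dprodmEr defG cf Kz => e; exact: e.
have gx : g x = x * y by rewrite gl ?cycle_id.
have gxc : g (x ^+ c) = (x * y) ^+ c by rewrite gl ?mem_cycle // f1X.
have sGgG : G \subset g @* G.
  rewrite -{1}defxK mul_subG //; last by apply/subsetP=> z Kz; rewrite -(gk z Kz) mem_morphim // (subsetP sKG).
  rewrite cycle_subG.
  have -> : x = g x * (g y)^-1 by rewrite gx (gk y Ky) mulgK.
  by rewrite groupM ?groupV ?mem_morphim.
have imG : g @* G = G.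
  by apply/eqP; rewrite eq_sym eqEcard sGgG leq_morphim.
have injg : 'injm g.
  rewrite -card_im_injm imG eqxx //.
have [_ /(_ g injg imG) gH] := charP _ _ chH.
have Gxc : x ^+ c \in G by rewrite groupX.
have ghH : g (x ^+ c * k) \in H by rewrite -gH mem_morphim // groupM // (subsetP sKG).
rewrite morphM // ?(subsetP sKG) // gxc (gk k Kk) expgMn // in ghH.
have -> : y ^+ c = (x ^+ c * y ^+ c * k) * (x ^+ c * k)^-1.
  by rewrite (commuteX2 c c cxy) -[y ^+ c * _ * k]mulgA mulgK.
by rewrite groupM ?groupV.
Qed.

Lemma cyc_pow (gT : finGroupType) (x : gT) (c d : nat) :
  gcdn d #[x] %| c -> x ^+ c \in <[x ^+ d]>.
Proof.
move=> gc; set g := gcdn d #[x].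
have gd : g %| d by apply: dvdn_gcdl.
have gx : g %| #[x] by apply: dvdn_gcdr.
have sub : <[x ^+ d]> \subset <[x ^+ g]>.
  by rewrite cycle_subG -(divnK gd) mulnC expgM mem_cycle.
have eqc : <[x ^+ d]> = <[x ^+ g]>.
  apply/eqP; rewrite eqEcard sub /= -!orderE !orderXgcd.
  by rewrite (gcdn_idPr gx) gcdnC.
by rewrite eqc -(divnK gc) mulnC expgM mem_cycle.
Qed.

Lemma pfactor_cmp (p a b : nat) : prime p -> a %| p ^ b -> forall c, c %| p ^ b -> (a %| c) || (c %| a).
Proof.
move=> pp /(dvdn_pfactor _ _ pp)[i _ ->] c /(dvdn_pfactor _ _ pp)[j _ ->].
by rewrite !dvdn_Pexp2l ?prime_gt1 // leq_total.
Qed.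

End PT1.
Import PT1.

Module PChain.
Set Implicit Arguments. Unset Strict Implicit. Unset Printing Implicit Defensive.
Local Open Scope group_scope.

Section Chain.
Variables (gT : finGroupType) (G : {group gT}) (p k n : nat) (x : 'I_n -> gT).
Hypotheses (pp : prime p) (cGG : abelian G)
  (defG : \big[dprod/1]_(i < n) <[x i]> = G)
  (ox : forall i, #[x i] = (p ^ k)%N \/ #[x i] = (p ^ k.+1)%N).

Definition KP (P : pred 'I_n) : {group gT} := << \bigcup_(i | P i) <[x i]> >>%G.

Lemma bigKP (P : pred 'I_n) : \big[dprod/1]_(i | P i) <[x i]> = KP P.
Proof.
have := defG; rewrite (bigID P) /= => /dprodP[[A B defA defB] _ _ _].
by rewrite defA; apply/esym; apply: bigdprodWY; rewrite defA.
Qed.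

Lemma KPT : KP predT :=: G.
Proof. by rewrite -bigKP. Qed.

Lemma memKP (P : pred 'I_n) j : P j -> x j \in KP P.
Proof. by move=> Pj; apply: mem_gen; apply/bigcupP; exists j; rewrite ?cycle_id. Qed.

Lemma KPS (P Q : pred 'I_n) : (forall j, P j -> Q j) -> KP P \subset KP Q.
Proof.
move=> PQ; rewrite gen_subG; apply/bigcupsP=> j Pj.
by rewrite cycle_subG memKP ?PQ.
Qed.

Lemma KP_split (P : pred 'I_n) i : P i -> <[x i]> \x KP (fun j => P j && (j != i)) = KP P.
Proof. by move=> Pi; rewrite -!bigKP [RHS](bigD1 i). Qed.

Lemma KP_sub (P : pred 'I_n) : KP P \subset G.
Proof. by rewrite -KPT; apply: KPS. Qed.

Lemma Gx i : x i \in G.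
Proof. by rewrite -KPT memKP. Qed.

Lemma defGi i : <[x i]> \x KP (fun j => j != i) = G.
Proof. by rewrite -KPT -(KP_split (P := predT) (i := i) isT). Qed.

Lemma KP0 (P : pred 'I_n) : (forall j, ~~ P j) -> KP P :=: 1.
Proof.
move=> nP; apply/trivgP; rewrite gen_subG; apply/bigcupsP=> j Pj.
by rewrite (negPf (nP j)) in Pj.
Qed.

Lemma Tr (H : {group gT}) i j m c kk : H \char G -> j != i ->
  #[x j ^+ m] %| #[x i] -> kk \in KP (fun l => l != i) -> x i ^+ c * kk \in H ->
  x j ^+ (m * c)%N \in H.
Proof.
move=> chH ji dv Kk Hh; rewrite expgM.
apply: (char_transvect cGG chH (defGi i) _ dv Kk Hh).
by rewrite groupX // memKP.
Qed.

Lemma Tr0 (H : {group gT}) i j m c : H \char G -> j != i ->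
  #[x j ^+ m] %| #[x i] -> x i ^+ c \in H -> x j ^+ (m * c)%N \in H.
Proof. by move=> chH ji dv Hh; apply: (Tr (kk := 1) chH ji dv (group1 _)); rewrite mulg1. Qed.

Lemma p_gt0 : 0 < p. Proof. exact: prime_gt0. Qed.

Lemma dv_same i j : #[x j] = #[x i] -> #[x j ^+ 1] %| #[x i].
Proof. by rewrite expg1 => ->. Qed.

Lemma dv_up i j : #[x j] = (p ^ k)%N -> #[x i] = (p ^ k.+1)%N -> #[x j ^+ 1] %| #[x i].
Proof. by rewrite expg1 => -> ->; rewrite dvdn_exp2l. Qed.

Lemma dv_down i j : #[x j] = (p ^ k.+1)%N -> #[x i] = (p ^ k)%N -> #[x j ^+ p] %| #[x i].
Proof.
by move=> oj oi; rewrite orderXdiv oj ?expnS ?dvdn_mulr // mulKn ?p_gt0 // oi.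
Qed.

Lemma gcdS c : (gcdn (p * c) (p ^ k.+1) = p * gcdn c (p ^ k))%N.
Proof. by rewrite expnS muln_gcdr. Qed.

Lemma pf_lt a b : a %| (p ^ k)%N -> b %| (p ^ k)%N -> ~~ (b %| a) -> (p * a %| b)%N.
Proof.
move=> /(dvdn_pfactor _ _ pp)[i _ ->] /(dvdn_pfactor _ _ pp)[j _ ->].
rewrite dvdn_Pexp2l ?prime_gt1 // -ltnNge => lt; rewrite -expnS dvdn_Pexp2l ?prime_gt1 //.
Qed.

Lemma ord_ne i : #[x i] = (p ^ k)%N \/ #[x i] = (p ^ k.+1)%N.
Proof. exact: ox. Qed.

Lemma pk_ne : (p ^ k != p ^ k.+1)%N.
Proof. by rewrite eqn_exp2l ?prime_gt1 // (ltn_eqF (ltnSn k)). Qed.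

Definition partner i := [exists j, (j != i) && (#[x j] == #[x i])].

Section Char.
Variable H : {group gT}.
Hypothesis chH : H \char G.

Lemma C1 i c kk : partner i -> kk \in KP (fun l => l != i) ->
  x i ^+ c * kk \in H -> x i ^+ c \in H.
Proof.
case/existsP=> j /andP[ji /eqP oji] Kk Hh.
have H1 := Tr chH ji (dv_same oji) Kk Hh; rewrite mul1n in H1.
have ij : i != j by rewrite eq_sym.
have := Tr0 chH ij (dv_same (esym oji)) H1; rewrite mul1n //.
Qed.

Lemma C2 i : (forall j, j != i -> partner j) ->
  forall c kk, kk \in KP (fun l => l != i) -> x i ^+ c * kk \in H -> x i ^+ c \in H.
Proof.
move=> allp.
suff IH : forall m (P : pred 'I_n), #|P| <= m -> (forall j, P j -> j != i) ->
  forall c kk, kk \in KP P -> x i ^+ c * kk \in H -> x i ^+ c \in H.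
  by move=> c kk; apply: (IH #|[pred l | l != i]|) => // j.
elim=> [|m IHm] P cP Pi c kk Kk Hh.
  have P0 : forall j, ~~ P j.
    by move: cP; rewrite leqn0 => /pred0P P0 j; rewrite P0.
  by move: Kk; rewrite KP0 // => /set1gP Kk; rewrite Kk mulg1 in Hh.
have [j Pj | P0] := pickP P; last first.
  by move: Kk; rewrite KP0 => [/set1gP Kk|j]; [rewrite Kk mulg1 in Hh | rewrite P0].
have [d [kk' [xd Kk' defk _]]] := mem_dprod (KP_split Pj) Kk.
case/cycleP: xd => c' defd.
have Gxic : x i ^+ c \in G by rewrite groupX // Gx.
have Gk' : kk' \in G by apply: (subsetP (KP_sub _)) Kk'.
have Gd : d \in G by rewrite defd groupX // Gx.
have eqh : x i ^+ c * kk = x j ^+ c' * (x i ^+ c * kk').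
  by rewrite defk -defd mulgA (centsP cGG _ Gxic _ Gd) mulgA.
have ij : i != j by rewrite eq_sym Pi.
have Kr : x i ^+ c * kk' \in KP (fun l => l != j).
  rewrite groupM ?groupX ?memKP //.
  by apply: (subsetP (KPS (P := fun l => P l && (l != j)) (Q := fun l => l != j) _)) Kk' => l /andP[].
have Hd : x j ^+ c' \in H.
  by apply: (C1 (allp j (Pi j Pj)) Kr); rewrite -eqh.
have Hr : x i ^+ c * kk' \in H.
  by rewrite -(mulKg (x j ^+ c') (x i ^+ c * kk')) -eqh groupM ?groupV.
apply: (IHm (fun l => P l && (l != j)) _ _ c kk' Kk' Hr).
  move: cP; rewrite (cardD1 j) unfold_in Pj add1n ltnS; apply: leq_trans.
  by apply: subset_leq_card; apply/subsetP=> l; rewrite !unfold_in /= andbC.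
by move=> l /andP[/Pi].
Qed.

Lemma three_vals i j l : j != i -> l != i -> l != j -> ~~ partner i -> ~~ partner j -> False.
Proof.
move=> ji li lj npi npj.
have nij : #[x j] != #[x i].
  by apply: contra npi => e; apply/existsP; exists j; rewrite ji e.
have nli : #[x l] != #[x i].
  by apply: contra npi => e; apply/existsP; exists l; rewrite li e.
have nlj : #[x l] != #[x j].
  by apply: contra npj => e; apply/existsP; exists l; rewrite lj e.
by move: nij nli nlj; case: (ox i) => ->; case: (ox j) => ->; case: (ox l) => ->;
  rewrite ?eqxx.
Qed.

Lemma C3 i j c kk : j != i -> ~~ partner i -> ~~ partner j ->
  kk \in KP (fun l => l != i) -> x i ^+ c * kk \in H -> x i ^+ c \in H.
Proof.
move=> ji npi npj Kk Hh.
have sK : KP (fun l => l != i) \subset <[x j]>.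
  rewrite gen_subG; apply/bigcupsP=> l li.
  have [-> //|lj] := eqVneq l j.
  by case: (three_vals ji li lj npi npj).
have [d kkd] := cycleP _ _ (subsetP sK _ Kk).
have ij : i != j by rewrite eq_sym.
have Kxi : x i ^+ c \in KP (fun l => l != j) by rewrite groupX ?memKP.
have Gxi : x i ^+ c \in G by rewrite groupX ?Gx.
have Gxj : x j ^+ d \in G by rewrite groupX ?Gx.
have Hh' : x j ^+ d * x i ^+ c \in H by rewrite -(centsP cGG _ Gxi _ Gxj) -kkd.
have nij : #[x j] != #[x i].
  by apply: contra npi => e; apply/existsP; exists j; rewrite ji e.
have fin : x j ^+ d \in H -> x i ^+ c \in H.
  by move=> Hj; have := groupM Hh (groupVr Hj); rewrite kkd mulgK.
have gc := @dvdn_gcdr c (p ^ k)%N; have gd := @dvdn_gcdr d (p ^ k)%N.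
case: (ox i) => oi; rewrite oi in nij.
- have oj : #[x j] = (p ^ k.+1)%N by case: (ox j) => // e; rewrite e eqxx in nij.
  have H1 := Tr chH ji (dv_down oj oi) Kk Hh.
  have H2 : x i ^+ d \in H.
    have := Tr chH ij (dv_up (i := j) (j := i) oi oj) Kxi Hh'; rewrite mul1n //.
  case: (boolP (gcdn d (p ^ k) %| gcdn c (p ^ k))) => [dc | ndc].
    rewrite -cycle_subG in H2; apply: (subsetP H2); apply: cyc_pow; rewrite oi.
    exact: dvdn_trans dc (dvdn_gcdl _ _).
  apply: fin.
  rewrite -cycle_subG in H1; apply: (subsetP H1); apply: cyc_pow; rewrite oj gcdS.
  exact: dvdn_trans (pf_lt gc gd ndc) (dvdn_gcdl _ _).
- have oj : #[x j] = (p ^ k)%N by case: (ox j) => // e; rewrite e eqxx in nij.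
  have H1 : x j ^+ c \in H.
    have := Tr chH ji (dv_up oj oi) Kk Hh; rewrite mul1n //.
  have H2 := Tr chH ij (dv_down (i := j) (j := i) oi oj) Kxi Hh'.
  case: (boolP (gcdn c (p ^ k) %| gcdn d (p ^ k))) => [cd | ncd].
    apply: fin; rewrite -cycle_subG in H1; apply: (subsetP H1); apply: cyc_pow.
    by rewrite oj; exact: dvdn_trans cd (dvdn_gcdl _ _).
  rewrite -cycle_subG in H2; apply: (subsetP H2); apply: cyc_pow; rewrite oi gcdS.
  exact: dvdn_trans (pf_lt gd gc ncd) (dvdn_gcdl _ _).
Qed.

Lemma Ccomb i c kk : kk \in KP (fun l => l != i) -> x i ^+ c * kk \in H -> x i ^+ c \in H.
Proof.
move=> Kk Hh.
case: (boolP (partner i)) => [pi | npi]; first exact: C1 pi Kk Hh.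
case: (boolP [forall j, (j != i) ==> partner j]) => [/forallP allp | /forallPn [j]].
  by apply: (C2 _ Kk Hh) => j ji; have := allp j; rewrite ji.
by rewrite negb_imply => /andP[ji npj]; apply: C3 ji npi npj Kk Hh.
Qed.

End Char.

Lemma Gen (H K : {group gT}) : H \char G ->
  (forall i, H :&: <[x i]> \subset K) -> H \subset K.
Proof.
move=> chH allK.
suff IH : forall m (P : pred 'I_n), #|P| <= m -> forall h, h \in H -> h \in KP P -> h \in K.
  apply/subsetP=> h Hh; apply: (IH #|predT| predT (leqnn _) h Hh).
  by rewrite KPT (subsetP (char_sub chH)).
elim=> [|m IHm] P cP h Hh Kh.
  have P0 : forall j, ~~ P j by move: cP; rewrite leqn0 => /pred0P P0 j; rewrite P0.
  by move: Kh; rewrite KP0 // => /set1gP ->.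
have [j Pj | P0] := pickP P; last first.
  by move: Kh; rewrite KP0 => [/set1gP ->|j]; [ | rewrite P0].
have [d [kk' [xd Kk' defh _]]] := mem_dprod (KP_split Pj) Kh.
case/cycleP: xd => c' defd.
have Kr : kk' \in KP (fun l => l != j).
  by apply: (subsetP (KPS (P := fun l => P l && (l != j)) (Q := fun l => l != j) _)) Kk' => l /andP[].
have Hd : d \in H by rewrite defd; apply: (Ccomb chH Kr); rewrite -defd -defh.
have Kd : d \in K by apply: (subsetP (allK j)); rewrite inE Hd defd mem_cycle.
have Hk : kk' \in H by rewrite -(mulKg d kk') -defh groupM ?groupV.
rewrite defh groupM //; apply: (IHm (fun l => P l && (l != j))) => //.
move: cP; rewrite (cardD1 j) unfold_in Pj add1n ltnS; apply: leq_trans.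
by apply: subset_leq_card; apply/subsetP=> l; rewrite !unfold_in /= andbC.
Qed.

Lemma pair_cross (H K : {group gT}) i j c d : H \char G -> K \char G ->
  #[x i] = (p ^ k)%N -> #[x j] = (p ^ k.+1)%N ->
  x i ^+ c \in H -> x j ^+ d \in K -> (x i ^+ c \in K) || (x j ^+ d \in H).
Proof.
move=> chH chK oi oj Hu Kw.
have ji : j != i by apply/eqP=> e; move: oj; rewrite e oi => /eqP; rewrite (negPf pk_ne).
have ij : i != j by rewrite eq_sym.
have H1 := Tr0 chH ji (dv_down oj oi) Hu.
have K1 : x i ^+ d \in K by have := Tr0 chK ij (dv_up oi oj) Kw; rewrite mul1n.
have gc := @dvdn_gcdr c (p ^ k)%N; have gd := @dvdn_gcdr d (p ^ k)%N.
case: (boolP (gcdn d (p ^ k) %| gcdn c (p ^ k))) => [dc | ndc].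
  rewrite -cycle_subG in K1; rewrite (subsetP K1) //; apply: cyc_pow; rewrite oi.
  exact: dvdn_trans dc (dvdn_gcdl _ _).
rewrite -cycle_subG in H1; rewrite (subsetP H1) ?orbT //; apply: cyc_pow; rewrite oj gcdS.
exact: dvdn_trans (pf_lt gc gd ndc) (dvdn_gcdl _ _).
Qed.

Lemma pair_same (H K : {group gT}) i j c d : H \char G -> K \char G ->
  #[x i] = #[x j] ->
  x i ^+ c \in H -> x j ^+ d \in K -> (x i ^+ c \in K) || (x j ^+ d \in H).
Proof.
move=> chH chK oij Hu Kw.
have [H1 K1] : x j ^+ c \in H /\ x i ^+ d \in K.
  have [e|ji] := eqVneq j i; first by rewrite e in Kw *.
  have ij : i != j by rewrite eq_sym.
  split; first by have := Tr0 chH ji (dv_same (esym oij)) Hu; rewrite mul1n.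
  by have := Tr0 chK ij (dv_same oij) Kw; rewrite mul1n.
have pN : #[x i] %| (p ^ k.+1)%N by case: (ox i) => ->; rewrite ?dvdn_exp2l.
have gc := dvdn_trans (@dvdn_gcdr c #[x i]) pN.
have gd := dvdn_trans (@dvdn_gcdr d #[x i]) pN.
case/orP: (pfactor_cmp pp gc gd) => [cd | dc].
  rewrite -cycle_subG in H1; rewrite (subsetP H1) ?orbT //; apply: cyc_pow; rewrite -oij.
  exact: dvdn_trans cd (dvdn_gcdl _ _).
rewrite -cycle_subG in K1; rewrite (subsetP K1) //; apply: cyc_pow.
exact: dvdn_trans dc (dvdn_gcdl _ _).
Qed.

Lemma chain_basis (H K : {group gT}) : H \char G -> K \char G ->
  (H \subset K) || (K \subset H).
Proof.
move=> chH chK.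
case: (boolP [forall i, H :&: <[x i]> \subset K]) => [/forallP allK | /forallPn [i /subsetPn [u /setIP [Hu xu] nKu]]].
  by rewrite Gen.
case: (boolP [forall j, K :&: <[x j]> \subset H]) => [/forallP allH | /forallPn [j /subsetPn [w /setIP [Kw xw] nHw]]].
  by rewrite (Gen chK) ?orbT.
exfalso.
case/cycleP: xu => c defu; case/cycleP: xw => d defw.
rewrite defu in Hu nKu; rewrite defw in Kw nHw.
have [oij | noij] := eqVneq #[x i] #[x j].
  by have := pair_same chH chK oij Hu Kw; rewrite (negPf nKu) (negPf nHw).
case: (ox i) => oi; case: (ox j) => oj; rewrite oi oj ?eqxx in noij => //.
  by have := pair_cross chH chK oi oj Hu Kw; rewrite (negPf nKu) (negPf nHw).
by have := pair_cross chK chH oj oi Kw Hu; rewrite (negPf nKu) (negPf nHw).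
Qed.

End Chain.

End PChain.
Import PChain.

Module PZZ.
Set Implicit Arguments. Unset Strict Implicit. Unset Printing Implicit Defensive.
Import GRing.Theory.
Local Open Scope group_scope.

Section RV.
Variables (N mu : nat).
Local Notation Z := 'I_N.+1.
Local Notation V := 'rV[Z]_mu.

Lemma rv_exp (u : V) : u ^+ N.+1 = 1.
Proof.
rewrite FinRing.zmodXgE; apply/matrixP=> i j; rewrite mulmxnE !mxE.
by apply: val_inj; rewrite Zp_mulrn /= modnMl.
Qed.

Lemma rv_card : #|[set: V]| = (N.+1 ^ mu)%N.
Proof. by rewrite cardsT card_mx card_ord mul1n. Qed.

Definition ev (i : 'I_mu) : V := (\row_j (if j == i then inZp 1 else 0))%R.
Definition rvB := [set ev i | i : 'I_mu].

Lemma rv_gen : [set: V] \subset <<rvB>>.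
Proof.
apply/subsetP=> u _.
have -> : u = (\sum_(i < mu) ev i *+ (u ord0 i : nat))%R.
  apply/matrixP=> a j; rewrite ord1 summxE (bigD1 j) //= big1 => [|i ij].
    rewrite mulmxnE mxE !eqxx addr0 /=.
    by apply: val_inj; rewrite Zp_mulrn /= modnMml mul1n modn_small.
  by rewrite mulmxnE mxE eq_sym (negPf ij) mul0rn.
apply: (big_ind (fun v : V => v \in <<rvB>>)) => [|v w Hv Hw|i _].
- exact: (group1 <<rvB>>).
- exact: (groupM Hv Hw).
- by rewrite -FinRing.zmodXgE groupX // mem_gen // imset_f.
Qed.

Lemma rv_rank : 'r([set: V]) <= mu.
Proof.
have eqT : [set: V] = <<rvB>> by apply/eqP; rewrite eqEsubset rv_gen subsetT.
rewrite -grank_abelian ?FinRing.zmod_abelian //.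
have := grank_min rvB; rewrite -eqT => h; apply: leq_trans h _.
by rewrite (leq_trans (leq_imset_card _ _)) // card_ord.
Qed.

End RV.

Lemma type_from_card (gT : finGroupType) (R : {group gT}) p a mu : prime p -> abelian R ->
  #|R| = (p ^ (a * mu))%N -> exponent R %| (p ^ a)%N -> 'r(R) <= mu ->
  abelian_type R = nseq (if a is 0 then 0 else mu) (p ^ a)%N.
Proof.
move=> pp cR cardR expdv rk.
have [a' le_a' eR] := dvdn_pfactor _ _ pp expdv.
have mc := max_card_abelian cR.
have ineq : (exponent R ^ 'r(R) <= #|R|)%N.
  by rewrite eR cardR -expnM leq_exp2l ?prime_gt1 // leq_mul.
have homR : homocyclic R by rewrite -mc.2 eqn_leq mc.1 ineq.
rewrite (abelian_type_homocyclic homR).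
have eqc : (a * mu = a' * 'r(R))%N.
  apply: (expnI (prime_gt1 pp)); rewrite -cardR expnM -eR.
  by apply/eqP; rewrite eqn_leq mc.1 ineq.
case: a cardR expdv le_a' eqc => [|a] cardR expdv le_a' eqc.
  move: le_a'; rewrite leqn0 => /eqP a'0; rewrite a'0 in eR.
  have := abelian_type_gt1 R; rewrite (abelian_type_homocyclic homR) eR expn0.
  by case: ('r(R)).
case: mu => [|mu] in cardR rk eqc *.
  by move: rk; rewrite leqn0 => /eqP ->.
have h1 : (a' * 'r(R) <= a.+1 * 'r(R))%N by rewrite leq_mul2r le_a' orbT.
have h2 : (a.+1 * 'r(R) <= a.+1 * mu.+1)%N by rewrite leq_mul2l rk orbT.
have e1 : (a.+1 * 'r(R) = a.+1 * mu.+1)%N.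
  by apply/eqP; rewrite eqn_leq h2 eqc h1.
have r_eq : 'r(R) = mu.+1 by apply/eqP; rewrite -(eqn_pmul2l (ltn0Sn a)) e1.
rewrite r_eq in eqc; rewrite r_eq.
have a'E : a' = a.+1 by apply/eqP; rewrite -(eqn_pmul2r (ltn0Sn mu)) eqc.
by rewrite eR a'E.
Qed.

Lemma rv_type p a mu : prime p ->
  abelian_type [set: 'rV['I_(p ^ a).-1.+1]_mu] = nseq (if a is 0 then 0 else mu) (p ^ a)%N.
Proof.
move=> pp.
have NE : (p ^ a).-1.+1 = (p ^ a)%N by rewrite prednK // expn_gt0 prime_gt0.
apply: type_from_card => //.
- exact: FinRing.zmod_abelian.
- by rewrite rv_card NE expnM.
- apply/exponentP => u _; rewrite -(rv_exp u); congr (u ^+ _); by rewrite NE.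
- exact: rv_rank.
Qed.

End PZZ.
Import PZZ.

Module PZZ2.
Set Implicit Arguments. Unset Strict Implicit. Unset Printing Implicit Defensive.
Import GRing.Theory.
Local Open Scope group_scope.

Lemma ZZ_abelian p k m1 m2 : abelian [set: ZZtype p k m1 m2].
Proof.
apply/centsP=> u _ v _; apply: (congr2 pair); apply: addrC.
Qed.

Lemma not1_in (gT : finGroupType) (b : seq gT) :
  all [pred m | m > 1] (map order b) -> 1 \notin b.
Proof.
move=> h; apply/negP=> b1; have := allP h _ (map_f (@order gT) b1).
by rewrite /= order1.
Qed.

Lemma ZZ_type p k m1 m2 : prime p ->
  perm_eq (abelian_type [set: ZZtype p k m1 m2])
          (nseq (if k is 0 then 0 else m1) (p ^ k)%N ++ nseq m2 (p ^ k.+1)%N).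
Proof.
move=> pp.
pose T1 := 'rV['I_(p ^ k).-1.+1]_m1; pose T2 := 'rV['I_(p ^ k.+1).-1.+1]_m2.
pose A1 := setX [set: T1] (1 : {set T2}).
pose A2 := setX (1 : {set T1}) [set: T2].
have iso1 : [set: T1]%G \isog [group of A1] := isog_setX1 T2 [set: T1]%G.
have iso2 : [set: T2]%G \isog [group of A2] := isog_set1X T1 [set: T2]%G.
have type1 : abelian_type A1 = nseq (if k is 0 then 0 else m1) (p ^ k)%N.
  by rewrite -(isog_abelian_type iso1) rv_type.
have type2 : abelian_type A2 = nseq m2 (p ^ k.+1)%N.
  by rewrite -(isog_abelian_type iso2) rv_type.
have cA1 : abelian A1 by rewrite -(isog_abelian iso1) FinRing.zmod_abelian.
have cA2 : abelian A2 by rewrite -(isog_abelian iso2) FinRing.zmod_abelian.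
have [b1 def1 mo1] := abelian_structure cA1.
have [b2 def2 mo2] := abelian_structure cA2.
have defT : A1 \x A2 = [set: ZZtype p k m1 m2].
  rewrite setX_dprod; apply/setP=> [[u v]]; rewrite !inE //.
have defZ : \big[dprod/1]_(z <- b1 ++ b2) <[z]> = [set: ZZtype p k m1 m2].
  by rewrite big_cat /= def1 def2.
have pG : p.-group [set: ZZtype p k m1 m2].
  rewrite /pgroup cardsT card_prod !card_mx !card_ord !prednK ?expn_gt0 ?prime_gt0 //.
  by rewrite pnatM !pnatX !pnat_id.
have n1 : 1 \notin b1 ++ b2.
  by apply: not1_in; rewrite map_cat all_cat mo1 mo2 !abelian_type_gt1.
have := abelian_type_pgroup pG defZ n1.
by rewrite map_cat mo1 mo2 type1 type2.
Qed.

End PZZ2.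
Import PZZ2.

Module PMain.
Set Implicit Arguments. Unset Strict Implicit. Unset Printing Implicit Defensive.
Local Open Scope group_scope.

Lemma seq_two (s : seq nat) u v : u != v -> all (fun t => (t == u) || (t == v)) s ->
  perm_eq s (nseq (count_mem u s) u ++ nseq (count_mem v s) v).
Proof.
move=> uv; elim: s => //= t s IH /andP[tuv alls].
case/orP: tuv => /eqP ->.
  by rewrite eqxx (negPf uv) add0n add1n /= perm_cons IH.
rewrite eqxx eq_sym (negPf uv) add0n add1n.
have -> : nseq (count_mem v s).+1 v = [:: v] ++ nseq (count_mem v s) v by [].
by rewrite perm_sym perm_catCA /= perm_cons perm_sym IH.
Qed.

Lemma to_pgroup (gT : finGroupType) (G : {group gT}) : abelian G -> char_chain G ->
  exists2 p, prime p & p.-group G.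
Proof.
move=> cGG chG.
have [G1 | ntG] := eqsVneq G 1.
  by exists 2 => //; rewrite G1 pgroup1.
have pp : prime (pdiv #|G|) by rewrite pdiv_prime // cardG_gt1.
set p := pdiv #|G| in pp *.
exists p => //; apply/pgroupP => q qp qG.
have [x Gx ox] := Cauchy pp (pdiv_dvd _).
have [y Gy oy] := Cauchy qp qG.
have sxp : <[x]> \subset 'O_p(G).
  apply: pcore_max; first by rewrite /pgroup -orderE ox pnat_id.
  by rewrite -sub_abelian_normal // cycle_subG.
have syq : <[y]> \subset 'O_q(G).
  apply: pcore_max; first by rewrite /pgroup -orderE oy pnat_id.
  by rewrite -sub_abelian_normal // cycle_subG.
case/orP: (chG _ _ (pcore_char p G) (pcore_char q G)) => s.
  have := mem_p_elt (pcore_pgroup q G) (subsetP (subset_trans sxp s) x (cycle_id x)).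
  by rewrite /p_elt ox pnatE // inE eq_sym.
have := mem_p_elt (pcore_pgroup p G) (subsetP (subset_trans syq s) y (cycle_id y)).
by rewrite /p_elt oy pnatE.
Qed.

Lemma not_mho (gT : finGroupType) (G K : {group gT}) x p a : prime p -> abelian G ->
  p.-group G -> <[x]> \x K = G -> #[x] = (p ^ a)%N -> 0 < a -> x \notin 'Mho^1(G).
Proof.
move=> pp cGG pG defG ox a0; apply/negP.
rewrite (MhoEabelian 1 pG cGG) => /imsetP[y Gy xy].
have [z [w [xz Kw yzw _]]] := mem_dprod defG Gy.
case/cycleP: xz => c zc.
have [_ defxK _ tiK] := dprodP defG.
have sKG : K \subset G by rewrite -defxK mulG_subr.
have Gx : x \in G by rewrite -cycle_subG -defxK mulG_subl.
have Gw : w \in G := subsetP sKG w Kw.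
have Gz : z \in G by rewrite zc groupX.
have czw : commute (x ^+ c) w by apply: (centsP cGG); rewrite -?zc.
rewrite yzw zc (expgMn _ czw) -expgM expn1 in xy.
have wp1 : w ^+ p = 1.
  apply/set1gP; rewrite -tiK inE (groupX _ Kw) andbT.
  have e := congr1 (mulg (x ^+ (c * p))^-1) xy; rewrite mulKg in e.
  rewrite -e.
  by rewrite groupM ?groupV ?mem_cycle ?cycle_id.
rewrite wp1 mulg1 in xy.
have : x ^+ 1 == x ^+ (c * p) by rewrite expg1 -xy.
rewrite eq_expg_mod_order ox => /eqP h.
have pd : p %| (p ^ a)%N by rewrite dvdn_exp.
have := congr1 (modn^~ p) h; rewrite /= !(modn_dvdm _ pd) modnMl modn_small ?prime_gt1 //.
Qed.

Lemma exp_pow (gT : finGroupType) (G : {group gT}) (p : nat) : p.-group G ->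
  exponent G = (p ^ logn p (exponent G))%N.
Proof.
move=> pG; have pe : p.-nat (exponent G) := pnat_dvd (exponent_dvdn G) pG.
by rewrite -p_part part_pnat_id.
Qed.

Lemma ohm_sub_mho (gT : finGroupType) (G : {group gT}) p : prime p -> abelian G ->
  p.-group G -> char_chain G ->
  'Ohm_(logn p (exponent G) - 2)(G) \subset 'Mho^1(G).
Proof.
move=> pp cGG pG chG; set e := logn p (exponent G).
have [he | he] := leqP e 1.
  have -> : (e - 2 = 0)%N by apply/eqP; rewrite subn_eq0 (leq_trans he).
  by rewrite Ohm0 sub1G.
case/orP: (chG _ _ (Ohm_char (e - 2) G) (Mho_char 1 G)) => // sMO.
exfalso.
have [x Gx ex] := exponent_witness (abelian_nil cGG).
have ox : #[x] = (p ^ e)%N by rewrite -ex (exp_pow pG).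
have xM : x ^+ (p ^ 1) \in 'Mho^1(G) := Mho_p_elt 1 Gx (mem_p_elt pG Gx).
have sOL : 'Ohm_(e - 2)(G) \subset 'Ldiv_(p ^ (e - 2))(G).
  by rewrite (OhmEabelian pG (abelianS (Ohm_sub _ _) cGG)).
have := subsetP sOL _ (subsetP sMO _ xM).
rewrite inE => /andP[_].
rewrite inE -expgM -expnD add1n -subSn // subSS => /eqP.
move/eqP; rewrite -order_dvdn ox dvdn_Pexp2l ?prime_gt1 //.
by rewrite subn1 -ltnS prednK ?ltnn // (ltn_trans _ he).
Qed.

Lemma basis_orders (gT : finGroupType) (G : {group gT}) p (b : seq gT) : prime p ->
  abelian G -> p.-group G -> char_chain G ->
  \big[dprod/1]_(y <- b) <[y]> = G -> 1 \notin b ->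
  forall y, y \in b ->
    #[y] = (p ^ (logn p (exponent G)).-1)%N \/ #[y] = (p ^ (logn p (exponent G)).-1.+1)%N.
Proof.
move=> pp cGG pG chG defG n1 y yb.
set e := logn p (exponent G).
have [K defK] : exists K : {group gT}, <[y]> \x K = G.
  have := defG; rewrite (perm_big _ (perm_to_rem yb)) big_cons => dG.
  have [[A B eA eB] _ _ _] := dprodP dG.
  by exists B; rewrite -eB.
have Gy : y \in G by have [_ <- _ _] := dprodP defK; apply/mulsgP; exists y 1; rewrite ?cycle_id ?group1 ?mulg1.
have dy : #[y] %| (p ^ e)%N by rewrite -(exp_pow pG) dvdn_exponent.
have [a le_ae oy] := dvdn_pfactor _ _ pp dy.
have a0 : 0 < a.
  rewrite lt0n; apply: contraNneq n1 => a0'; rewrite a0' expn0 in oy.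
  by move/eqP: oy; rewrite order_eq1 => /eqP <-.
have ge : e.-1 <= a.
  rewrite leqNgt; apply/negP => lt.
  have yO : y \in 'Ohm_(e - 2)(G).
    rewrite (OhmEabelian pG (abelianS (Ohm_sub _ _) cGG)) inE Gy inE -order_dvdn oy.
    by rewrite dvdn_exp2l // subn2 -ltnS (ltn_predK lt).
  have := not_mho pp cGG pG defK oy a0.
  by rewrite (subsetP (ohm_sub_mho pp cGG pG chG) _ yO).
have e0 : 0 < e by apply: leq_trans a0 le_ae.
rewrite (prednK e0) oy.
have [ae | ne] := eqVneq a e.-1; first by left; rewrite ae.
right; congr (_ ^ _)%N; apply/eqP; rewrite eqn_leq le_ae -(prednK e0).
by rewrite ltn_neqAle eq_sym ne ge.
Qed.

Lemma forward (gT : finGroupType) (G : {group gT}) : abelian G -> char_chain G ->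
  exists p k mu1 mu2 : nat, prime p /\ G \isog [set: ZZtype p k mu1 mu2].
Proof.
move=> cGG chG.
have [p pp pG] := to_pgroup cGG chG.
have [b defb mob] := abelian_structure cGG.
have n1 : 1 \notin b by apply: not1_in; rewrite mob abelian_type_gt1.
have ob := basis_orders pp cGG pG chG defb n1.
move: ob; move: ((logn p (exponent G)).-1) => k ob.
pose s := map order b.
exists p, k, (count_mem (p ^ k)%N s), (count_mem (p ^ k.+1)%N s); split => //.
rewrite eq_abelian_type_isog ?ZZ_abelian //; apply/eqP.
have zt := ZZ_type k (count_mem (p ^ k)%N s) (count_mem (p ^ k.+1)%N s) pp.
have E : (if k is 0 then 0 else count_mem (p ^ k)%N s) = count_mem (p ^ k)%N s.
  case: k {ob zt} => // ; apply/esym/count_memPn; rewrite expn0.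
  by apply/negP => /mapP[y yb /esym/eqP]; rewrite order_eq1 => /eqP y1; move: n1; rewrite -y1 yb.
rewrite E in zt.
have uv : (p ^ k != p ^ k.+1)%N by rewrite eqn_exp2l ?prime_gt1 // (ltn_eqF (ltnSn k)).
have alls : all (fun t => (t == p ^ k)%N || (t == p ^ k.+1)%N) s.
  by apply/allP => t /mapP[y yb ->]; case: (ob y yb) => ->; rewrite eqxx ?orbT.
have ps := seq_two uv alls.
apply: (sorted_eq (leT := geq)).
- by move=> y x z h1 h2; apply: leq_trans h2 h1.
- by move=> x y /andP[h1 h2]; apply: anti_leq; apply/andP; split.
- exact: abelian_type_sorted.
- exact: abelian_type_sorted.
rewrite -mob; apply: perm_trans ps _; by rewrite perm_sym.
Qed.

Lemma backward (gT : finGroupType) (G : {group gT}) p k m1 m2 : abelian G -> prime p ->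
  G \isog [set: ZZtype p k m1 m2] -> char_chain G.
Proof.
move=> cGG pp iso H K chH chK.
have tG := isog_abelian_type iso.
have zt := ZZ_type k m1 m2 pp.
have [b defb mob] := abelian_structure cGG.
have defG' : \big[dprod/1]_(i < size b) <[nth 1 b i]> = G.
  by rewrite -defb (big_nth 1) big_mkord.
apply: (chain_basis pp cGG defG' _ chH chK) => i.
have : #[nth 1 b i] \in abelian_type [set: ZZtype p k m1 m2].
  by rewrite -tG -mob map_f // mem_nth.
rewrite (perm_mem zt) mem_cat !mem_nseq => /orP[/andP[_ /eqP->]|/andP[_ /eqP->]];
  by [left | right].
Qed.

End PMain.
Import PMain.

Theorem mainTheorem9 (gT : finGroupType) (G : {group gT}) (abG : abelian G) :
  char_chain G <->
  exists p k mu1 mu2 : nat,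
    prime p /\ G \isog [set: ZZtype p k mu1 mu2].
Proof.
split; first exact: forward.
by case=> p [k [m1 [m2 [pp iso]]]]; apply: (backward abG pp iso).
Qed.
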